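(* Let $M$ be an entrywise nonnegative $m\times n$ real matrix and let $M=AW$ be a stable nonnegative matrix factorization with $A\in\mathbb{R}_{\ge0}^{m\times r}$, $W\in\mathbb{R}_{\ge0}^{r\times n}$. Let $s=\mathrm{rank}(A)$, let $U\subseteq[m]$ be a set of $s$ linearly independent rows of $A$, and let $B_1,\dots,B_p$ be the ensemble of $A$ at $U$. Then for each column index $i$, among the set of vectors $\mathcal S=\{B_1M_i^U,\dots,B_pM_i^U\}$, $W_i$ is the unique vector with lexicographically minimal support among all entrywise nonnegative vectors in $\mathcal S$.
   Context: Notation: $M_i$ is the $i$-th column, $M^j$ the $j$-th row; for sets of indices, $A_S$ denotes columns in $S$, $A^U$ rows in $U$, and $M_i^U$ the entries of column $M_i$ in rows $U$ (a vector in $\mathbb{R}^s$). $\mathrm{aff}(A)=\{\sum_i\alpha_iA_i:\alpha_i\ge0\}$. A subset $S\subseteq[r]$ of columns of $A$ is admissible for $v\in\mathbb{R}^m$ if $v\in\mathrm{aff}(A_S)$; a subset $T\subseteq[r]$ of rows of $W$ is admissible for a row vector $u$ if $u$ is a nonnegative combination of rows of $W^T$. Lexicographic ordering on subsets of $[r]$: if $|S|<|T|$ then $S$ precedes $T$; equal-size subsets are compared by the standard lexicographic order. Support = set of indices of nonzero entries. $M=AW$ is stable if, with $S_i$ the lexicographically first subset of columns of $A$ admissible for $M_i$ and $T_j$ the lexicographically first subset of rows of $W$ admissible for $M^j$, each $W_i$ is supported in $S_i$ and each row $A^j$ is supported in $T_j$. Ensemble: let $S_1,\dots,S_p\subseteq[r]$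 be the full list (in lexicographic order) of all sets of $s$ columns of $A$ that are linearly independent; the ensemble of $A$ at $U$ is $B_1,\dots,B_p$, where $B_k$ is the $r\times s$ matrix that is zero on all rows outside $S_k$ and whose restriction to the rows in $S_k$ equals $(A^U_{S_k})^{-1}$ (the inverse of the $s\times s$ submatrix of $A$ with rows $U$ and columns $S_k$). *)

(* Defs.v *)
From HB Require Import structures.
From mathcomp Require Import all_boot all_order all_algebra.
Set Implicit Arguments. Unset Strict Implicit. Unset Printing Implicit Defensive.
Import Order.TTheory GRing.Theory Num.Theory.
Local Open Scope ring_scope.

Fixpoint seqlex_lt (s t : seq nat) : bool :=
  match s, t with
  | [::], [::] => false
  | [::], _ :: _ => true
  | _ :: _, [::] => false
  | x :: s', y :: t' => (x < y)%N || ((x == y) && seqlex_lt s' t')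
  end.

(* Lexicographic ordering on subsets of [r]: smaller cardinality first; equal
   cardinality compared by the standard lexicographic order of the increasingly
   sorted lists of elements (enum S is increasing). *)
Definition setlex_lt (r : nat) (S T : {set 'I_r}) : bool :=
  (#|S| < #|T|)%N ||
  ((#|S| == #|T|) && seqlex_lt (map val (enum S)) (map val (enum T))).

Definition lexfirst (r : nat) (P : {set 'I_r} -> Prop) (S : {set 'I_r}) : Prop :=
  P S /\ forall T, P T -> T <> S -> setlex_lt S T.

Definition csupp (R : ringType) (r : nat) (v : 'cV[R]_r) : {set 'I_r} :=
  [set j | v j 0 != 0].
Definition rsupp (R : ringType) (r : nat) (v : 'rV[R]_r) : {set 'I_r} :=
  [set j | v 0 j != 0].

Definition mx_nonneg (R : numDomainType) (p q : nat) (X : 'M[R]_(p, q)) : Prop :=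
  forall i j, 0 <= X i j.

Definition col_admissible (R : numDomainType) (m r : nat) (A : 'M[R]_(m, r))
  (v : 'cV[R]_m) (S : {set 'I_r}) : Prop :=
  exists alpha : 'cV[R]_r,
    (forall j, 0 <= alpha j 0) /\ (forall j, j \notin S -> alpha j 0 = 0) /\
    v = A *m alpha.

Definition row_admissible (R : numDomainType) (r n : nat) (W : 'M[R]_(r, n))
  (u : 'rV[R]_n) (T : {set 'I_r}) : Prop :=
  exists beta : 'rV[R]_r,
    (forall j, 0 <= beta 0 j) /\ (forall j, j \notin T -> beta 0 j = 0) /\
    u = beta *m W.

Definition stable (R : numDomainType) (m n r : nat) (M : 'M[R]_(m, n))
  (A : 'M[R]_(m, r)) (W : 'M[R]_(r, n)) : Prop :=
  (forall (i : 'I_n) (S : {set 'I_r}),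
      lexfirst (col_admissible A (col i M)) S -> csupp (col i W) \subset S) /\
  (forall (j : 'I_m) (T : {set 'I_r}),
      lexfirst (row_admissible W (row j M)) T -> rsupp (row j A) \subset T).

Definition rows_of (R : Type) (m r : nat) (A : 'M[R]_(m, r)) (U : {set 'I_m})
  : 'M[R]_(#|U|, r) := \matrix_(a < #|U|, j < r) A (enum_val a) j.
Definition cols_of (R : Type) (m r : nat) (A : 'M[R]_(m, r)) (S : {set 'I_r})
  : 'M[R]_(m, #|S|) := \matrix_(i < m, b < #|S|) A i (enum_val b).

Definition subsq (R : Type) (m r : nat) (A : 'M[R]_(m, r)) (U : {set 'I_m})
  (S : {set 'I_r}) (h : #|S| = #|U|) : 'M[R]_#|U| :=
  \matrix_(a < #|U|, b < #|U|) A (enum_val a) (enum_val (cast_ord (esym h) b)).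

(* The ensemble member B_S : the r x s matrix, zero outside the rows in S,
   whose restriction to the rows in S is (A^U_S)^{-1}. *)
Definition ens_mx (R : fieldType) (m r : nat) (A : 'M[R]_(m, r)) (U : {set 'I_m})
  (S : {set 'I_r}) (h : #|S| = #|U|) : 'M[R]_(r, #|U|) :=
  (\matrix_(j < r, b < #|U|) ((j == enum_val (cast_ord (esym h) b))%:R : R))
    *m invmx (subsq A h).

Definition colU (R : Type) (m n : nat) (M : 'M[R]_(m, n)) (U : {set 'I_m})
  (i : 'I_n) : 'cV[R]_#|U| := \col_(a < #|U|) M (enum_val a) i.

(* The set {B_1 M_i^U, ..., B_p M_i^U}, B_k ranging over the ensemble of A at U,
   i.e. over all sets S of s = |U| linearly independent columns of A. *)
Definition ensemble_vecs (R : fieldType) (m n r : nat) (A : 'M[R]_(m, r))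
  (M : 'M[R]_(m, n)) (U : {set 'I_m}) (i : 'I_n) (v : 'cV[R]_r) : Prop :=
  exists (S : {set 'I_r}) (h : #|S| = #|U|),
    \rank (cols_of A S) = #|S| /\ v = ens_mx A h *m colU M U i.

(* Main.v *)
Require Import Defs.
From HB Require Import structures.
From mathcomp Require Import all_boot all_order all_algebra.
From Stdlib Require Import Classical.
Set Implicit Arguments. Unset Strict Implicit. Unset Printing Implicit Defensive.
Import Order.TTheory GRing.Theory Num.Theory.
Local Open Scope ring_scope.

Lemma seqlex_irr (s : seq nat) : seqlex_lt s s = false.
Proof. by elim: s => //= x s ->; rewrite ltnn eqxx. Qed.

Lemma seqlex_trans (s t u : seq nat) :
  seqlex_lt s t -> seqlex_lt t u -> seqlex_lt s u.
Proof.
elim: s t u => [|x s IH] [|y t] [|z u] //= H1 H2.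
case/orP: H1 => [H1|/andP[/eqP e1 H1]]; case/orP: H2 => [H2|/andP[/eqP e2 H2]].
- by rewrite (ltn_trans H1 H2).
- by apply/orP; left; rewrite -e2.
- by rewrite e1 H2.
- by rewrite e1 e2 eqxx (IH _ _ H1 H2) orbT.
Qed.

Lemma seqlex_total (s t : seq nat) : size s = size t -> s != t ->
  seqlex_lt s t || seqlex_lt t s.
Proof.
elim: s t => [|x s IH] [|y t] //= [e] ne.
case: (ltngtP x y) => //= exy; subst y; rewrite ?eqxx /=.
apply: IH => //; apply: contra ne => /eqP ->; by [].
Qed.

Lemma setlex_irr r (S : {set 'I_r}) : setlex_lt S S = false.
Proof. by rewrite /setlex_lt ltnn seqlex_irr andbF. Qed.

Lemma setlex_trans r (S T V : {set 'I_r}) :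
  setlex_lt S T -> setlex_lt T V -> setlex_lt S V.
Proof.
rewrite /setlex_lt => /orP[H1|/andP[/eqP e1 H1]] /orP[H2|/andP[/eqP e2 H2]].
- by rewrite (ltn_trans H1 H2).
- by apply/orP; left; rewrite -e2.
- by apply/orP; left; rewrite e1.
- apply/orP; right; apply/andP; split; first by rewrite e1 e2.
  exact: (seqlex_trans H1 H2).
Qed.

Lemma setlex_total r (S T : {set 'I_r}) : S != T ->
  setlex_lt S T || setlex_lt T S.
Proof.
move=> ne; rewrite /setlex_lt.
case: (ltngtP #|S| #|T|) => e.
- by [].
- by rewrite orbT.
rewrite orFb andTb orFb andTb.
apply: seqlex_total.
  rewrite !size_map; exact: (etrans (esym (cardE S)) (etrans e (cardE T))).
apply: contra ne => /eqP /(inj_map val_inj) E.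
apply/eqP/setP => x; have := mem_enum S x; have := mem_enum T x.
by rewrite E => -> ->.
Qed.

Lemma setlex_card r (S T : {set 'I_r}) : setlex_lt S T -> (#|S| <= #|T|)%N.
Proof. by rewrite /setlex_lt => /orP[/ltnW|/andP[/eqP -> _]]. Qed.

Lemma lexfirst_exists r (P : {set 'I_r} -> Prop) S0 : P S0 ->
  exists S, lexfirst P S.
Proof.
move=> PS0.
suff H : forall k S, (#|[set T | setlex_lt T S]| < k)%N -> P S -> exists S, lexfirst P S.
  exact: (H _ S0 (ltnSn _) PS0).
elim=> // k IH S HS PS.
case: (classic (exists T, P T /\ setlex_lt T S)) => [[T [PT lTS]]|nex].
  apply: (IH T) => //.
  rewrite -ltnS; apply: leq_trans _ HS; rewrite ltnS; apply: proper_card; apply/properP; split.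
    by apply/subsetP => V; rewrite !inE => /setlex_trans; apply.
  by exists T; rewrite !inE ?setlex_irr.
exists S; split => // T PT nTS.
case/orP: (@setlex_total r S T (introN eqP (nesym nTS))) => // h.
by exfalso; apply: nex; exists T; split.
Qed.

Definition sel (R : fieldType) r k (f : 'I_k -> 'I_r) : 'M[R]_(r, k) :=
  \matrix_(j < r, b < k) ((j == f b)%:R : R).

Definition supported (R : fieldType) r (S : {set 'I_r}) (x : 'cV[R]_r) : Prop :=
  forall j, j \notin S -> x j 0 = 0.

Definition selS r k (f : 'I_k -> 'I_r) (S : {set 'I_r}) : Prop :=
  [/\ injective f, (forall b, f b \in S) & (forall j, j \in S -> exists b, f b = j)].

Lemma mul_sel (R : fieldType) p r k (X : 'M[R]_(p, r)) (f : 'I_k -> 'I_r) :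
  X *m sel R f = \matrix_(a, b) X a (f b).
Proof.
apply/matrixP => a b; rewrite !mxE (bigD1 (f b)) //= big1 => [|j /negbTE ne].
  by rewrite mxE eqxx mulr1 addr0.
by rewrite mxE ne mulr0.
Qed.

Lemma selT_mul (R : fieldType) p r k (X : 'M[R]_(r, p)) (f : 'I_k -> 'I_r) :
  (sel R f)^T *m X = \matrix_(b, c) X (f b) c.
Proof.
apply/matrixP => b c; rewrite !mxE (bigD1 (f b)) //= big1 => [|j /negbTE ne].
  by rewrite !mxE eqxx mul1r addr0.
by rewrite !mxE ne mul0r.
Qed.

Lemma selT_sel (R : fieldType) r k (f : 'I_k -> 'I_r) : injective f ->
  (sel R f)^T *m sel R f = 1%:M.
Proof.
move=> fi; rewrite selT_mul; apply/matrixP => a b; rewrite !mxE (inj_eq fi).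
by rewrite eq_sym.
Qed.

Lemma sel_selT (R : fieldType) r k (f : 'I_k -> 'I_r) S (x : 'cV[R]_r) :
  selS f S -> supported S x -> sel R f *m ((sel R f)^T *m x) = x.
Proof.
case=> fi fS Sf xS; rewrite selT_mul; apply/matrixP => j c; rewrite (ord1 c) !mxE.
case: (boolP (j \in S)) => jS.
  have [b0 <-] := Sf j jS.
  rewrite (bigD1 b0) //= big1 => [|b /negbTE ne]; first by rewrite !mxE eqxx mul1r addr0.
  by rewrite !mxE (inj_eq fi) eq_sym ne mul0r.
rewrite xS // big1 // => b _; rewrite !mxE.
have -> : (j == f b) = false by apply/negbTE; apply: contra jS => /eqP ->.
by rewrite mul0r.
Qed.

Lemma sel_supp (R : fieldType) r k (f : 'I_k -> 'I_r) S (y : 'cV[R]_k) :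
  selS f S -> supported S (sel R f *m y).
Proof.
case=> fi fS Sf j jS; rewrite !mxE big1 // => b _; rewrite !mxE.
have -> : (j == f b) = false by apply/negbTE; apply: contra jS => /eqP ->.
by rewrite mul0r.
Qed.

Lemma selS_enum r (S : {set 'I_r}) : selS (@enum_val _ (mem S)) S.
Proof.
split; [exact: enum_val_inj | exact: enum_valP |].
by move=> j jS; exists (enum_rank_in jS j); rewrite enum_rankK_in.
Qed.

Lemma selS_cast r (S : {set 'I_r}) k (h : #|S| = k) :
  selS (fun b : 'I_k => enum_val (cast_ord (esym h) b)) S.
Proof.
split.
- by move=> a b /enum_val_inj /cast_ord_inj.
- by move=> b; exact: enum_valP.
by move=> j jS; exists (cast_ord h (enum_rank_in jS j)); rewrite cast_ordK enum_rankK_in.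
Qed.

Lemma ker_rank (R : fieldType) p k (X : 'M[R]_(p, k)) :
  (forall y : 'cV[R]_k, X *m y = 0 -> y = 0) <-> \rank X = k.
Proof.
split => [H|H].
  rewrite -mxrank_tr; apply/eqP; apply: inj_row_free => v Hv.
  apply: trmx_inj; rewrite trmx0; apply: H.
  by rewrite -(trmxK X) -trmx_mul Hv trmx0.
move=> y Hy.
have rf : row_free X^T by rewrite /row_free mxrank_tr H.
have := mulmx_free_eq0 y^T rf; rewrite -trmx_mul Hy trmx0 eqxx => /esym/eqP.
by move=> /(congr1 trmx); rewrite trmxK trmx0.
Qed.

Definition indep (R : fieldType) m r (A : 'M[R]_(m, r)) (S : {set 'I_r}) : Prop :=
  forall x : 'cV[R]_r, supported S x -> A *m x = 0 -> x = 0.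

Lemma cols_ofE (R : fieldType) m r (A : 'M[R]_(m, r)) (S : {set 'I_r}) :
  cols_of A S = A *m sel R (@enum_val _ (mem S)).
Proof. by rewrite mul_sel; apply/matrixP => i b; rewrite !mxE. Qed.

Lemma rank_indep (R : fieldType) m r (A : 'M[R]_(m, r)) (S : {set 'I_r}) :
  \rank (cols_of A S) = #|S| <-> indep A S.
Proof.
rewrite cols_ofE -ker_rank; have sS := selS_enum S.
split => [H x xS Ax|H y Hy].
  have E := sel_selT sS xS.
  rewrite -E (H ((sel R (@enum_val _ (mem S)))^T *m x)) ?mulmx0 //.
  by rewrite -mulmxA E.
have := H _ (sel_supp y sS); rewrite mulmxA Hy => /(_ erefl) E.
case: sS => fi _ _.
by rewrite -[y]mul1mx -(selT_sel R fi) -mulmxA E mulmx0.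
Qed.

Lemma indep_card (R : fieldType) m r (A : 'M[R]_(m, r)) S :
  indep A S -> (#|S| <= \rank A)%N.
Proof.
move/rank_indep => <-; rewrite cols_ofE; exact: mxrankM_maxl.
Qed.

Lemma delta_supp (R : fieldType) r (S : {set 'I_r}) j :
  j \in S -> supported S (delta_mx j 0 : 'cV[R]_r).
Proof.
move=> jS k kS; rewrite mxE.
have -> : (k == j) = false by apply/negbTE; apply: contra kS => /eqP ->.
by [].
Qed.

Lemma grow (R : fieldType) m r (A : 'M[R]_(m, r)) S :
  indep A S -> (#|S| < \rank A)%N -> exists j, j \notin S /\ indep A (j |: S).
Proof.
move=> iS lt; apply: NNPP => nex.
pose P := sel R (@enum_val _ (mem S)).
have sS := selS_enum S.
have HP : forall j, exists z : 'cV[R]_#|S|, col j A = (A *m P) *m z.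
  move=> j; case: (boolP (j \in S)) => jS.
    exists (P^T *m delta_mx j 0); rewrite -mulmxA (sel_selT sS (delta_supp R jS)).
    exact: colE.
  have ni : ~ indep A (j |: S) by move=> H; apply: nex; exists j.
  have [x [xs [Ax xn]]] : exists x : 'cV[R]_r,
      supported (j |: S) x /\ A *m x = 0 /\ x <> 0.
    apply: NNPP => H; apply: ni => x xs Ax; apply: NNPP => xn; apply: H.
    by exists x.
  have xj : x j 0 != 0.
    apply/negP => /eqP xj0; apply: xn; apply: iS => // k kS.
    case: (k =P j) => [->//|ne]; apply: xs.
    by rewrite in_setU1 negb_or kS andbT; apply/eqP.
  pose u := delta_mx j 0 - (x j 0)^-1 *: x.
  have us : supported S u.
    move=> k kS; rewrite !mxE; case: (k =P j) => [->|ne].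
      by rewrite eqxx /= mulVf // subrr.
    have -> : x k 0 = 0 by apply: xs; rewrite in_setU1 negb_or kS andbT; apply/eqP.
    by rewrite mulr0 subr0.
  exists (P^T *m u); rewrite -mulmxA (sel_selT sS us).
  by rewrite mulmxBr -scalemxAr Ax scaler0 subr0 colE.
have sub : (A^T <= (A *m P)^T)%MS.
  apply/row_subP => j; have [z Hz] := HP j.
  by rewrite -tr_col Hz trmx_mul submxMl.
have := mxrankS sub; rewrite !mxrank_tr.
have := iS; rewrite -rank_indep cols_ofE => ->.
by rewrite leqNgt lt.
Qed.

Lemma extend (R : fieldType) m r (A : 'M[R]_(m, r)) T :
  indep A T -> exists S : {set 'I_r}, T \subset S /\ indep A S /\ #|S| = \rank A.
Proof.
move=> iT.
suff H : forall d (S : {set 'I_r}), T \subset S -> indep A S -> (#|S| + d = \rank A)%N ->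
    exists S : {set 'I_r}, T \subset S /\ indep A S /\ #|S| = \rank A.
  apply: (H (\rank A - #|T|)%N T (subxx _) iT).
  by rewrite subnKC // indep_card.
elim=> [|d IH] S TS iS e; first by exists S; rewrite -e addn0.
have [j [jS ijS]] := grow iS (leq_trans (leq_addr d _) (eq_leq (etrans (addSnnS _ _) e))).
apply: (IH (j |: S)) => //.
  by apply: subset_trans TS (subsetUr _ _).
by rewrite cardsU1 jS add1n addSnnS.
Qed.

Lemma subsqE (R : fieldType) m r (A : 'M[R]_(m, r)) (U : {set 'I_m}) (S : {set 'I_r}) (h : #|S| = #|U|) :
  subsq A h = rows_of A U *m sel R (fun b => enum_val (cast_ord (esym h) b)).
Proof. by rewrite mul_sel; apply/matrixP => a b; rewrite !mxE. Qed.

Lemma subsq_unit (R : fieldType) m r (A : 'M[R]_(m, r)) (U : {set 'I_m}) (S : {set 'I_r})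
  (h : #|S| = #|U|) C :
  A = C *m rows_of A U -> indep A S -> subsq A h \in unitmx.
Proof.
move=> AC iS; rewrite -row_free_unit /row_free; apply/eqP; apply/ker_rank => y Hy.
have sS := selS_cast h.
pose E := sel R (fun b => enum_val (cast_ord (esym h) b)).
have Ey : E *m y = 0.
  apply: iS; first exact: (sel_supp y sS).
  by rewrite AC -mulmxA (mulmxA (rows_of A U)) -(subsqE A h) Hy mulmx0.
case: sS => fi _ _.
by rewrite -[y]mul1mx -(selT_sel R fi) -mulmxA Ey mulmx0.
Qed.

Lemma finmin (R : realDomainType) (I : finType) (P : pred I) (F : I -> R) i1 :
  P i1 -> exists i0, P i0 /\ forall j, P j -> F i0 <= F j.
Proof. move=> P1; case: (@arg_minP _ R I i1 P F P1) => i Pi H; by exists i. Qed.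

Lemma carath (R : realFieldType) m r (A : 'M[R]_(m, r)) (w : 'cV[R]_r) :
  (forall j, 0 <= w j 0) -> lexfirst (col_admissible A (A *m w)) (csupp w) ->
  indep A (csupp w).
Proof.
move=> w0 [_ Lf] x xs Ax; apply: NNPP => xn.
have [x' [x's [Ax' [j1 neg1]]]] : exists x' : 'cV[R]_r, supported (csupp w) x' /\
    A *m x' = 0 /\ exists j, x' j 0 < 0.
  case: (boolP [exists j, x j 0 < 0]) => [/existsP[j hj]|/existsPn hn].
    by exists x; split => //; split => //; exists j.
  have [j hj] : exists j, x j 0 != 0.
    apply: NNPP => H; apply: xn; apply/matrixP => k l; rewrite (ord1 l) mxE.
    by apply/eqP; apply: NNPP => H2; apply: H; exists k; apply/negP.
  exists (- x); split; [|split].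
  - by move=> k kS; rewrite mxE xs // oppr0.
  - by rewrite mulmxN Ax oppr0.
  exists j; rewrite mxE oppr_lt0 lt_def hj /= leNgt; exact: hn.
pose F j := w j 0 / - x' j 0.
have [j0 [neg0 minj]] := @finmin R _ (fun j => x' j 0 < 0) F j1 neg1.
pose t := F j0.
have t0 : 0 <= t by rewrite /t /F divr_ge0 // oppr_ge0 ltW.
pose y := w + t *: x'.
have yE k : y k 0 = w k 0 + t * x' k 0 by rewrite !mxE.
have y0 k : 0 <= y k 0.
  rewrite yE; case: (ltP (x' k 0) 0) => hk.
    have := minj k hk; rewrite /F -/(F j0) -/t ler_pdivlMr ?oppr_gt0 // mulrN.
    by rewrite -subr_ge0 opprK.
  by rewrite addr_ge0 // mulr_ge0.
have Ay : A *m y = A *m w by rewrite mulmxDr -scalemxAr Ax' scaler0 addr0.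
have nz0 : x' j0 0 != 0 by rewrite lt_eqF.
have yj0 : y j0 0 = 0.
  rewrite yE /t /F invrN mulrN mulNr -mulrA mulVf // mulr1 subrr //.
have j0w : j0 \in csupp w.
  by apply: contraT => h; move: nz0; rewrite x's // eqxx.
have sub : csupp y \subset csupp w :\ j0.
  apply/subsetP => k; rewrite !inE => yk; apply/andP; split.
    by apply: contraNneq yk => ->; rewrite yj0.
  apply: contraT => h.
  have wk : w k 0 = 0 by move: h; rewrite negbK => /eqP.
  have xk : x' k 0 = 0 by apply: x's; rewrite inE wk eqxx.
  by move: yk; rewrite yE wk xk mulr0 addr0 eqxx.
have lt : (#|csupp y| < #|csupp w|)%N.
  rewrite (cardsD1 j0 (csupp w)) j0w add1n ltnS; exact: subset_leq_card.
have adm : col_admissible A (A *m w) (csupp y).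
  exists y; split => //; split => //.
  by move=> k; rewrite inE negbK => /eqP.
have ne : csupp y <> csupp w by move=> e; move: lt; rewrite e ltnn.
have := @setlex_card r _ _ (Lf _ adm ne); by rewrite leqNgt lt.
Qed.

Unset Implicit Arguments.

Theorem mainTheorem4 (R : realFieldType) (m n r : nat)
  (M : 'M[R]_(m, n)) (A : 'M[R]_(m, r)) (W : 'M[R]_(r, n)) (U : {set 'I_m}) :
  mx_nonneg M -> mx_nonneg A -> mx_nonneg W -> M = A *m W ->
  stable M A W ->
  #|U| = \rank A ->
  \rank (rows_of A U) = #|U| ->
  forall i : 'I_n,
    ensemble_vecs A M U i (col i W) /\
    (forall v : 'cV[R]_r, ensemble_vecs A M U i v -> mx_nonneg v ->
       v <> col i W -> setlex_lt (csupp (col i W)) (csupp v)).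
Proof.
move=> M0 A0 W0 MAW [stC _] hU hRU i.
pose w := col i W.
have bE : col i M = A *m w.
  by rewrite MAW; apply/matrixP => a b; rewrite !mxE; apply: eq_bigr => j _; rewrite !mxE.
have w0 : forall j, 0 <= w j 0 by move=> j; rewrite mxE.
have admw : col_admissible A (col i M) (csupp w).
  exists w; split => //; split => //.
  by move=> j; rewrite inE negbK => /eqP.
have [S0 LS0] := @lexfirst_exists r _ _ admw.
have sub := stC i S0 LS0.
have eS : S0 = csupp w.
  case: LS0 => _ L; apply: NNPP => ne.
  have c := @setlex_card r _ _ (L _ admw (nesym ne)).
  apply: ne; apply/eqP; rewrite eq_sym eqEcard sub /=; exact: c.
have Lw : lexfirst (col_admissible A (A *m w)) (csupp w) by rewrite -bE -eS.
have iw := carath w0 Lw.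
have [C AC] : exists C, A = C *m rows_of A U.
  have s1 : (rows_of A U <= A)%MS.
    apply/row_subP => a.
    have -> : row a (rows_of A U) = row (enum_val a) A by apply/rowP => k; rewrite !mxE.
    exact: row_sub.
  have [_ e] := mxrank_leqif_sup s1.
  have s2 : (A <= rows_of A U)%MS by rewrite -e; apply/eqP; rewrite hRU hU.
  by apply/submxP.
have colUE : colU M U i = rows_of A U *m w.
  apply/matrixP => a b; rewrite (ord1 b) !mxE MAW mxE; apply: eq_bigr => j _.
  by rewrite !mxE.
split.
  have [S [wS [iS cS]]] := extend iw.
  have h : #|S| = #|U| by rewrite cS hU.
  exists S, h; split; first by apply/rank_indep.
  have sS := selS_cast h.
  have ws : supported S w.
    move=> j jS; have : j \notin csupp w by apply: contra jS; apply: (subsetP wS).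
    by rewrite inE negbK => /eqP.
  have wE := sel_selT sS ws.
  have uS := subsq_unit h AC iS.
  rewrite /ens_mx colUE -/w.
  rewrite -{2}wE (mulmxA (rows_of A U)) -(subsqE A h) -mulmxA mulKmx //.
move=> v [S' [h' [rk ve]]] v0 vn.
have iS' := (rank_indep A S').1 rk.
have uS' := subsq_unit h' AC iS'.
have key : rows_of A U *m v = rows_of A U *m w.
  rewrite ve /ens_mx mulmxA.
  rewrite (mulmxA (rows_of A U)) -(subsqE A h') mulmxV // mul1mx colUE //.
have Av : A *m v = A *m w by rewrite {1}AC -mulmxA key mulmxA -AC.
have adm : col_admissible A (A *m w) (csupp v).
  exists v; split => //; split => //.
  by move=> j; rewrite inE negbK => /eqP.
have ne : csupp v <> csupp w.
  move=> e; apply: vn; apply/eqP; rewrite -subr_eq0; apply/eqP; apply: iw.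
    move=> j jw; have jv : j \notin csupp v by rewrite e.
    move: jw jv; rewrite !inE !negbK !mxE => /eqP -> /eqP ->; exact: subrr.
  by rewrite mulmxBr Av subrr.
exact: (proj2 Lw) _ adm ne.
Qed.
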